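(* For all integers $d\ge 0$ and $t>0$, the unary words $a^d$ and $a^{d+t}$ can be separated exactly by a 2-state AfA over $\{a\}$ whose end-marker operator $A_\$$ is the identity.
   Context: An $n$-state affine finite automaton (AfA) over a finite alphabet $\Sigma$ consists of real $n\times n$ matrices $A_\sigma$ for $\sigma\in\Sigma\cup\{\$\}$ ($\$$ a right end-marker not in $\Sigma$), each of whose columns sums to $1$; an initial vector $v_0\in\mathbb{R}^n$ whose entries sum to $1$; and a set $E_a\subseteq\{1,\dots,n\}$ of accepting states. On input $w=w_1\cdots w_k$ the final vector is $v_f=A_\$A_{w_k}\cdots A_{w_1}v_0$, and $w$ is accepted with probability $\sum_{j\in E_a}|v_f[j]|\big/\sum_{j=1}^n|v_f[j]|$. A pair of words is separated exactly if one is accepted with probability $1$ and the other with probability $0$. *)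

(* Defs.v *)
From Stdlib Require Import Reals List.
Import ListNotations.
Open Scope R_scope.

(* States are indexed 0..n-1 (the paper's 1..n). *)
Definition rsum (n : nat) (f : nat -> R) : R :=
  fold_right Rplus 0 (map f (seq 0 n)).

Definition Mat := nat -> nat -> R.   (* A i j = entry in row i, column j *)
Definition Vec := nat -> R.

Definition mat_vec (n : nat) (A : Mat) (v : Vec) : Vec :=
  fun i => rsum n (fun j => A i j * v j).

Record AfA (n : nat) (Sigma : Type) := mkAfA {
  trans  : Sigma -> Mat;
  endmat : Mat;
  init   : Vec;
  acc    : nat -> bool        (* E_a (only j < n are relevant) *)
}.
Arguments trans {n Sigma}.
Arguments endmat {n Sigma}.
Arguments init {n Sigma}.
Arguments acc {n Sigma}.

Definition col_sums_one (n : nat) (A : Mat) : Prop :=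
  forall j, (j < n)%nat -> rsum n (fun i => A i j) = 1.

Definition is_AfA {n Sigma} (M : AfA n Sigma) : Prop :=
  (forall s, col_sums_one n (trans M s)) /\
  col_sums_one n (endmat M) /\
  rsum n (init M) = 1.

Definition final_vec {n Sigma} (M : AfA n Sigma) (w : list Sigma) : Vec :=
  mat_vec n (endmat M)
    (fold_left (fun v s => mat_vec n (trans M s) v) w (init M)).

Definition accept_prob {n Sigma} (M : AfA n Sigma) (w : list Sigma) : R :=
  let vf := final_vec M w in
  rsum n (fun j => if acc M j then Rabs (vf j) else 0) /
  rsum n (fun j => Rabs (vf j)).

Definition separates_exactly {n Sigma} (M : AfA n Sigma) (u w : list Sigma) : Prop :=
  (accept_prob M u = 1 /\ accept_prob M w = 0) \/
  (accept_prob M u = 0 /\ accept_prob M w = 1).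

Definition endmarker_identity {n Sigma} (M : AfA n Sigma) : Prop :=
  forall i j, (i < n)%nat -> (j < n)%nat ->
    endmat M i j = if Nat.eqb i j then 1 else 0.

Definition a_pow (k : nat) : list unit := repeat tt k.

(* Main.v *)
Require Import Defs.
From Stdlib Require Import Reals List Lra Lia.
Open Scope R_scope.

Definition tmat (c : R) : Mat := fun i j =>
  match i, j with
  | O, O => 1 + c
  | O, _ => c
  | _, O => - c
  | _, _ => 1 - c
  end.

Definition idm : Mat := fun i j => if Nat.eqb i j then 1 else 0.

Lemma fold_step (c : R) (k : nat) : forall v : Vec,
  v 0%nat + v 1%nat = 1 ->
  let r := fold_left (fun v s => mat_vec 2 (tmat c) v) (repeat tt k) v in
  r 0%nat = v 0%nat + INR k * c /\ r 1%nat = v 1%nat - INR k * c.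
Proof.
  induction k as [|k IH]; intros v Hv.
  - simpl; split; ring.
  - rewrite S_INR. simpl.
    destruct (IH (mat_vec 2 (tmat c) v)) as [H0 H1].
    + unfold mat_vec, rsum; simpl. lra.
    + simpl in H0, H1. rewrite H0, H1. unfold mat_vec, rsum; simpl.
      split; nra.
Qed.

Theorem mainTheorem7 :
  forall d t : nat, (0 < t)%nat ->
  exists M : AfA 2 unit,
    is_AfA M /\ endmarker_identity M /\
    separates_exactly M (a_pow d) (a_pow (d + t)).
Proof.
  intros d t Ht.
  assert (Htp : 0 < INR t) by (apply lt_0_INR; lia).
  set (c := / INR t).
  set (x0 := - INR d * c).
  exists (mkAfA 2 unit (fun _ => tmat c) idm
            (fun i => match i with O => x0 | _ => 1 - x0 end)
            (fun j => Nat.eqb j 0)).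
  split; [|split].
  - split; [|split].
    + intros s j Hj. unfold rsum, tmat; simpl.
      destruct j as [|[|j]]; [lra|lra|lia].
    + intros j Hj. unfold rsum, idm; simpl.
      destruct j as [|[|j]]; [simpl; lra|simpl; lra|lia].
    + unfold rsum; simpl. lra.
  - intros i j Hi Hj. reflexivity.
  - right.
    assert (Hinit : forall k : nat,
      let v := final_vec (mkAfA 2 unit (fun _ => tmat c) idm
            (fun i => match i with O => x0 | _ => 1 - x0 end)
            (fun j => Nat.eqb j 0)) (a_pow k) in
      v 0%nat = x0 + INR k * c /\ v 1%nat = 1 - x0 - INR k * c).
    { intros k. unfold final_vec, a_pow; simpl.
      destruct (fold_step c k (fun i => match i with O => x0 | _ => 1 - x0 end))
        as [H0 H1]; [simpl; lra|].
      simpl in H0, H1. unfold mat_vec at 1, rsum, idm; simpl.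
      set (F := fold_left _ _ _) in *. unfold mat_vec, rsum; simpl. split; lra. }
    destruct (Hinit d) as [A0 A1]. destruct (Hinit (d + t)%nat) as [B0 B1].
    rewrite plus_INR in B0, B1.
    assert (E1 : x0 + INR d * c = 0) by (unfold x0; ring).
    assert (E2 : INR t * c = 1) by (unfold c; field; lra).
    unfold accept_prob; simpl. unfold rsum; simpl.
    rewrite A0, A1, B0, B1.
    split.
    + replace (x0 + INR d * c) with 0 by lra.
      rewrite Rabs_R0. unfold Rdiv. ring.
    + replace (x0 + (INR d + INR t) * c) with 1 by lra.
      replace (1 - x0 - (INR d + INR t) * c) with 0 by lra.
      rewrite Rabs_R0, Rabs_R1. field.
Qed.
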